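(* Let $N\ge 10^{40}$ be real, let $\mathcal{A}=\mathbb{Z}\cap(N,N+3N^{2/3})$, $X=\max\mathcal{A}$, $z=X^{1/5}$ and $y=X^{1/1.85}$. Then $$\sum_{\substack{q\text{ prime}\\ z\le q<y}}|\mathcal{A}_{q^2}|\le 0.03\,|\mathcal{A}|^{0.82}.$$
   Context: For a positive integer $d$, $\mathcal{A}_d=\{a\in\mathcal{A}: d\mid a\}$, and $|\cdot|$ denotes cardinality. *)

(* Defs.v *)
From Stdlib Require Import Bool Reals Lra Lia ZArith Arith List Znumtheory.
Import ListNotations.
Open Scope R_scope.
Open Scope bool_scope.

(* Membership in A = Z ∩ (N, N + 3 N^{2/3}).  Since N >= 10^40 > 0, every
   element of A is a positive integer, so we enumerate A inside nat. *)
Definition inA (N : R) (n : nat) : bool :=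
  if Rlt_dec N (INR n) then
    if Rlt_dec (INR n) (N + 3 * Rpower N (2/3)) then true else false
  else false.

(* Every n in A satisfies n < N + 3N^{2/3} < up(N + 3N^{2/3}). *)
Definition Abound (N : R) : nat := Z.to_nat (up (N + 3 * Rpower N (2/3))).

Definition Alist (N : R) : list nat := filter (inA N) (seq 0 (Abound N)).

Definition Acard (N : R) : nat := length (Alist N).

Definition Acard_div (N : R) (d : nat) : nat :=
  length (filter (fun n => Nat.eqb (Nat.modulo n d) 0) (Alist N)).

Definition Xmax (N : R) : R := INR (fold_right Nat.max 0%nat (Alist N)).

Definition primeb (q : nat) : bool :=
  if prime_dec (Z.of_nat q) then true else false.

(* sum_{q prime, z <= q < y} |A_{q^2}| ; all such q are < up y. *)
Definition prime_square_sum (N z y : R) : nat :=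
  fold_right Nat.add 0%nat
    (map (fun q => Acard_div N (q * q))
       (filter (fun q => (primeb q &&
                  (if Rle_dec z (INR q) then true else false)) &&
                  (if Rlt_dec (INR q) y then true else false))
          (seq 0 (Z.to_nat (up y))))).

(* Main.v *)
Require Import Defs.
From Stdlib Require Import Reals Lra Lia List Sorting.Sorted ZArith Arith Bool.
Import ListNotations.
Open Scope R_scope.

Lemma ss_seq : forall n s, StronglySorted lt (seq s n).
Proof.
  induction n; intros s; simpl; constructor; auto.
  apply Forall_forall; intros x Hx; apply in_seq in Hx; lia.
Qed.

Lemma ss_filter_gap (P : nat -> bool) (g : nat) : forall l,
  StronglySorted lt l ->
  (forall x y, In x l -> In y l -> P x = true -> P y = true -> (x < y)%nat -> (x + g <= y)%nat) ->
  StronglySorted (fun x y => (x + g <= y)%nat) (filter P l).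
Proof.
  induction l as [|a l IH]; intros Hs Hg; simpl; [constructor|].
  inversion Hs; subst.
  assert (IH' := IH H1 (fun x y hx hy => Hg x y (or_intror hx) (or_intror hy))).
  destruct (P a) eqn:Pa; auto.
  constructor; auto.
  apply Forall_forall; intros x Hx. apply filter_In in Hx as [Hx Px].
  apply Hg; simpl; auto. rewrite Forall_forall in H2; auto.
Qed.

Lemma ss_span (g : nat) : forall r x, StronglySorted (fun x y => (x + g <= y)%nat) (x :: r) ->
  exists y, In y (x :: r) /\ (x + g * length r <= y)%nat.
Proof.
  induction r as [|b r IH]; intros x Hs.
  - exists x; simpl; split; auto; lia.
  - inversion Hs; subst. destruct (IH b H1) as [y [Hy Hle]].
    inversion H2; subst. exists y; split; [right; auto|]. simpl length. nia.
Qed.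

Lemma gap_count (P : nat -> bool) (g : nat) (W : R) (l : list nat) :
  StronglySorted lt l -> (0 < g)%nat -> 0 <= W ->
  (forall x y, In x l -> In y l -> P x = true -> P y = true -> (x < y)%nat -> (x + g <= y)%nat) ->
  (forall x y, In x l -> In y l -> P x = true -> P y = true -> (x < y)%nat -> INR y - INR x < W) ->
  INR (length (filter P l)) <= W / INR g + 1.
Proof.
  intros Hs Hg HW Hgap Hw.
  assert (Hgr : 0 < INR g) by (apply lt_0_INR; lia).
  assert (HS := ss_filter_gap P g l Hs Hgap).
  destruct (filter P l) as [|x r] eqn:E.
  - simpl. assert (0 <= W / INR g) by (unfold Rdiv; apply Rmult_le_pos; [lra| left; apply Rinv_0_lt_compat; lra]). lra.
  - destruct (ss_span g r x HS) as [y [Hy Hle]].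
    assert (Hx : In x (filter P l)) by (rewrite E; left; auto).
    assert (Hy' : In y (filter P l)) by (rewrite E; auto).
    apply filter_In in Hx as [Hx Px]. apply filter_In in Hy' as [Hy' Py].
    destruct r as [|b r].
    + simpl. assert (0 <= W / INR g) by (unfold Rdiv; apply Rmult_le_pos; [lra| left; apply Rinv_0_lt_compat; lra]). lra.
    + assert (Hxy : (x < y)%nat) by (simpl length in Hle; nia).
      assert (H1 := Hw x y Hx Hy' Px Py Hxy).
      apply le_INR in Hle. rewrite plus_INR, mult_INR in Hle.
      change (length (x :: b :: r)) with (S (length (b :: r))). rewrite S_INR.
      assert (INR g * INR (length (b :: r)) < W) by lra.
      assert (INR (length (b :: r)) < W / INR g).
      { apply (Rmult_lt_reg_l (INR g)); auto. field_simplify; lra. }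
      lra.
Qed.

Fixpoint sumR (f : nat -> R) (l : list nat) : R :=
  match l with [] => 0 | x :: r => f x + sumR f r end.

Lemma INR_natsum f l : INR (fold_right Nat.add 0%nat (map f l)) = sumR (fun q => INR (f q)) l.
Proof. induction l; simpl; auto. rewrite plus_INR, IHl; auto. Qed.

Lemma sumR_le_in f g l : (forall x, In x l -> f x <= g x) -> sumR f l <= sumR g l.
Proof. induction l; simpl; intros H; [lra|]. apply Rplus_le_compat; auto. Qed.

Lemma sumR_plus f g l : sumR (fun x => f x + g x) l = sumR f l + sumR g l.
Proof. induction l; simpl; auto; lra. Qed.

Lemma sumR_scal c f l : sumR (fun x => c * f x) l = c * sumR f l.
Proof. induction l; simpl; [lra| rewrite IHl; lra]. Qed.

Lemma sumR_ind (P : nat -> bool) l : sumR (fun x => if P x then 1 else 0) l = INR (length (filter P l)).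
Proof. induction l; cbn [sumR filter]; auto. destruct (P a); cbn [length]; try rewrite S_INR; lra. Qed.

Lemma sumR_const_le f c l : (forall x, In x l -> f x <= c) -> sumR f l <= c * INR (length l).
Proof. induction l; cbn [sumR length]; intros H; [simpl; lra|]. rewrite S_INR. specialize (IHl (fun x h => H x (or_intror h))).
  specialize (H a (or_introl eq_refl)). lra. Qed.

Lemma sumR_nonneg f l : (forall x, 0 <= f x) -> 0 <= sumR f l.
Proof. intros H; induction l; simpl; [lra|]. specialize (H a); lra. Qed.

Lemma sumR_filter_le f P l : (forall x, 0 <= f x) -> sumR f (filter P l) <= sumR f l.
Proof. intros H; induction l; simpl; [lra|]. destruct (P a); simpl; specialize (H a); lra. Qed.

Lemma sumR_app f l1 l2 : sumR f (l1 ++ l2) = sumR f l1 + sumR f l2.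
Proof. induction l1; simpl; auto; lra. Qed.

Lemma natsum_plus (f g : nat -> nat) ms :
  fold_right Nat.add 0%nat (map (fun m => f m + g m)%nat ms) =
  (fold_right Nat.add 0%nat (map f ms) + fold_right Nat.add 0%nat (map g ms))%nat.
Proof. induction ms; simpl; auto. rewrite IHms; lia. Qed.

Lemma natsum_ind_pos (Pm : nat -> nat -> bool) q ms : (exists m, In m ms /\ Pm m q = true) ->
  (1 <= fold_right Nat.add 0%nat (map (fun m => if Pm m q then 1 else 0)%nat ms))%nat.
Proof. induction ms; simpl; intros [m [Hm Hp]]; [destruct Hm|].
  destruct Hm as [<-|Hm]. rewrite Hp; lia.
  assert (1 <= fold_right Nat.add 0%nat (map (fun m => if Pm m q then 1 else 0)%nat ms))%nat by (apply IHms; eauto). lia. Qed.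

Lemma union_count (B : nat -> bool) (Pm : nat -> nat -> bool) ms l :
  (forall q, In q l -> B q = true -> exists m, In m ms /\ Pm m q = true) ->
  (length (filter B l) <= fold_right Nat.add 0%nat (map (fun m => length (filter (Pm m) l)) ms))%nat.
Proof.
  induction l as [|q l IH]; intros H; simpl.
  - lia.
  - assert (E : map (fun m => length (if Pm m q then q :: filter (Pm m) l else filter (Pm m) l)) ms
             = map (fun m => (if Pm m q then 1 else 0) + length (filter (Pm m) l))%nat ms).
    { apply map_ext; intros m; destruct (Pm m q); reflexivity. }
    rewrite E, natsum_plus.
    specialize (IH (fun q' h => H q' (or_intror h))).
    destruct (B q) eqn:Bq; simpl; [|lia].
    destruct (B q) eqn:HBq.
    + cbn [length].
      assert (1 <= fold_right Nat.add 0%nat (map (fun m => if Pm m q then 1 else 0)%nat ms))%nat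
        by (apply natsum_ind_pos; apply H; [left; reflexivity | exact HBq]). lia.
    + lia.
Qed.

Lemma tele : forall n a, (2 <= a)%nat ->
  sumR (fun q => 1 / (INR q)^2) (seq a n) <= 1 / (INR a - 1) - 1 / (INR a + INR n - 1).
Proof.
  induction n; intros a Ha; cbn [seq sumR].
  - rewrite Rplus_0_r; lra.
  - specialize (IHn (S a) ltac:(lia)). rewrite S_INR in IHn. rewrite S_INR.
    assert (Hr : 2 <= INR a) by (replace 2 with (INR 2) by (simpl; lra); apply le_INR; auto).
    assert (0 <= INR n) by apply pos_INR.
    assert (1 / INR a ^ 2 <= 1 / (INR a - 1) - 1 / INR a).
    { apply Rmult_le_reg_r with (INR a ^ 2 * (INR a - 1)). nra. field_simplify; try nra. }
    replace (INR a + 1 + INR n - 1) with (INR a + (INR n + 1) - 1) in IHn by ring.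
    replace (INR a + 1 - 1) with (INR a) in IHn by ring. lra.
Qed.

Lemma inv_sq_nonneg x : 0 <= 1 / (INR x)^2.
Proof. unfold Rdiv; rewrite Rmult_1_l. rewrite <- pow_inv. apply pow2_ge_0. Qed.

Lemma filter_nil_all (P : nat -> bool) l : (forall x, In x l -> P x = false) -> filter P l = [].
Proof. induction l; simpl; intros H; auto. rewrite H by auto. apply IHl; auto. Qed.

Lemma tele_filter (P : nat -> bool) a K : (2 <= a)%nat ->
  (forall q, P q = true -> (a <= q)%nat) ->
  sumR (fun q => 1 / (INR q)^2) (filter P (seq 0 K)) <= 1 / (INR a - 1).
Proof.
  intros Ha HP.
  assert (Hr : 2 <= INR a) by (replace 2 with (INR 2) by (simpl; lra); apply le_INR; auto).
  assert (Hp : 0 <= 1 / (INR a - 1)) by (apply Rlt_le; unfold Rdiv; rewrite Rmult_1_l; apply Rinv_0_lt_compat; lra).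
  destruct (le_lt_dec a K) as [HK|HK].
  - replace K with (a + (K - a))%nat by lia. rewrite seq_app, filter_app, sumR_app.
    rewrite (filter_nil_all P (seq 0 a)).
    2:{ intros x Hx. apply in_seq in Hx. destruct (P x) eqn:E; auto. apply HP in E. lia. }
    cbn [sumR]. rewrite Rplus_0_l.
    eapply Rle_trans. apply sumR_filter_le. apply inv_sq_nonneg.
    eapply Rle_trans. apply tele. auto.
    assert (0 < 1 / (INR a + INR (K - a) - 1)).
    { unfold Rdiv; rewrite Rmult_1_l; apply Rinv_0_lt_compat. assert (0 <= INR (K-a)) by apply pos_INR. lra. }
    simpl (0 + a)%nat. lra.
  - rewrite (filter_nil_all P (seq 0 K)).
    2:{ intros x Hx. apply in_seq in Hx. destruct (P x) eqn:E; auto. apply HP in E. lia. }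
    simpl; lra.
Qed.

Lemma inA_spec N n : inA N n = true <-> N < INR n < N + 3 * Rpower N (2/3).
Proof. unfold inA. destruct (Rlt_dec N (INR n)); [destruct (Rlt_dec (INR n) (N + 3 * Rpower N (2/3)))|]; split; intros; try discriminate; try tauto; lra. Qed.

Lemma Alist_in N n : In n (Alist N) -> N < INR n < N + 3 * Rpower N (2/3).
Proof. unfold Alist. intros H. apply filter_In in H as [_ H]. apply inA_spec; auto. Qed.

Lemma Alist_sorted N : StronglySorted lt (Alist N).
Proof.
  unfold Alist. assert (H := ss_filter_gap (inA N) 1 _ (ss_seq (Abound N) 0)).
  assert (E : forall l, StronglySorted (fun x y => (x + 1 <= y)%nat) l -> StronglySorted lt l).
  { induction l as [|a l IH]; intros Hl; constructor; inversion Hl; subst; auto.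
    eapply Forall_impl; [|eassumption]. simpl; intros; lia. }
  apply E, H. intros; lia.
Qed.

Lemma Rpower_pos x y : 0 < Rpower x y.
Proof. unfold Rpower; apply exp_pos. Qed.

Lemma Acard_div_bound N d : (1 <= d)%nat ->
  INR (Acard_div N d) <= 3 * Rpower N (2/3) / INR d + 1.
Proof.
  intros Hd. unfold Acard_div.
  assert (HL := Rpower_pos N (2/3)).
  apply gap_count; [apply Alist_sorted | lia | lra | |].
  - intros x y _ _ Px Py Hxy. apply Nat.eqb_eq in Px, Py.
    apply Nat.Div0.mod_divides in Px as [a Ha]. apply Nat.Div0.mod_divides in Py as [b Hb].
    subst. assert (a < b)%nat by nia. nia.
  - intros x y Hx Hy _ _ _. apply Alist_in in Hx, Hy. lra.
Qed.

Definition Rleb (a b : R) : bool := if Rle_dec a b then true else false.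

Lemma fiber_bound N Q m K : 0 < Q -> (1 <= m)%nat ->
  INR (length (filter (fun q => Rleb Q (INR q) && inA N (q * q * m)) (seq 0 K)))
  <= 3 * Rpower N (2/3) / (2 * Q) + 1.
Proof.
  intros HQ Hm.
  assert (HL := Rpower_pos N (2/3)).
  assert (HW : 0 <= 3 * Rpower N (2/3) / (2 * Q)).
  { unfold Rdiv. apply Rmult_le_pos; [lra|]. left; apply Rinv_0_lt_compat; lra. }
  eapply Rle_trans.
  apply (gap_count _ 1 (3 * Rpower N (2/3) / (2 * Q))); [apply ss_seq | lia | exact HW | |].
  - intros; lia.
  - intros x y _ _ Px Py Hxy. apply andb_prop in Px as [Qx Ax]. apply andb_prop in Py as [_ Ay].
    unfold Rleb in Qx. destruct (Rle_dec Q (INR x)) as [Qx'|]; [|discriminate].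
    apply inA_spec in Ax, Ay. rewrite !mult_INR in Ax, Ay.
    assert (HM : 1 <= INR m) by (replace 1 with (INR 1) by reflexivity; apply le_INR; auto).
    assert (HY : INR x + 1 <= INR y) by (rewrite <- S_INR; apply le_INR; lia).
    assert (H0 : (INR y - INR x) * (2 * Q) <= (INR y - INR x) * (INR x + INR y)).
    { apply Rmult_le_compat_l; lra. }
    assert (H0' : 0 <= (INR y - INR x) * (INR x + INR y)) by (apply Rmult_le_pos; lra).
    assert (H1 : (INR y - INR x) * (2 * Q) <= (INR y * INR y - INR x * INR x) * INR m).
    { replace (INR y * INR y - INR x * INR x) with ((INR y - INR x) * (INR x + INR y)) by ring.
      nra. }
    assert (H2 : (INR y - INR x) * (2 * Q) < 3 * Rpower N (2/3)) by lra.
    apply (Rmult_lt_reg_r (2 * Q)); [lra|]. unfold Rdiv. rewrite Rmult_assoc, Rinv_l; lra.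
  - simpl INR. rewrite Rdiv_1_r. lra.
Qed.

Lemma filter_all_len (P : nat -> bool) l : (forall x, In x l -> P x = true) -> length (filter P l) = length l.
Proof. induction l; simpl; intros H; auto. rewrite H by auto. simpl; rewrite IHl; auto. Qed.

Lemma up_nat r : 0 < r -> INR (Z.to_nat (up r)) = IZR (up r) /\ r < IZR (up r) <= r + 1.
Proof.
  intros Hr. destruct (archimed r) as [H1 H2].
  assert (Hp : (0 < up r)%Z) by (apply lt_IZR; lra).
  split; [|lra]. rewrite INR_IZR_INZ, Z2Nat.id; auto; lia.
Qed.

Lemma Rpower_ge1 N : 1 <= N -> 1 <= Rpower N (2/3).
Proof. intros H. rewrite <- (Rpower_O N) by lra. apply Rle_Rpower; lra. Qed.

Lemma Acard_lower N : 1 <= N -> 3 * Rpower N (2/3) - 2 <= INR (Acard N).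
Proof.
  intros HN1. assert (HN : 0 < N) by lra. assert (HL1 := Rpower_ge1 N HN1). set (L := 3 * Rpower N (2/3)).
  assert (HL : 0 < Rpower N (2/3)) by apply Rpower_pos.
  unfold Acard, Alist, Abound. fold L.
  set (n0 := Z.to_nat (up N)). set (n1 := Z.to_nat (up (N + L))).
  destruct (up_nat N HN) as [E0 [A0 B0]]. destruct (up_nat (N + L)) as [E1 [A1 B1]]; [unfold L; lra|].
  fold n0 in E0. fold n1 in E1.
  assert (Hlt : (n0 + 1 < n1)%nat).
  { apply INR_lt. rewrite plus_INR, E0, E1. simpl INR. unfold L in *. lra. }
  replace n1 with (n0 + ((n1 - n0 - 1) + 1))%nat by lia.
  rewrite seq_app, seq_app, !filter_app, !length_app.
  rewrite (filter_all_len _ (seq (0 + n0) (n1 - n0 - 1))).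
  2:{ intros x Hx. apply in_seq in Hx. apply inA_spec. fold L.
      assert (INR n0 <= INR x) by (apply le_INR; lia).
      assert (INR x + 2 <= INR n1) by (replace 2 with (INR 2) by (simpl; lra); rewrite <- plus_INR; apply le_INR; lia).
      lra. }
  rewrite length_seq.
  assert (INR (n1 - n0 - 1) <= INR (length (filter (inA N) (seq 0 n0)) + (n1 - n0 - 1 +
      length (filter (inA N) (seq (0 + n0 + (n1 - n0 - 1)) 1)))))
    by (apply le_INR; lia).
  rewrite !minus_INR in H by lia. change (INR 1) with 1 in H. lra.
Qed.

Lemma in_le_max x l : In x l -> (x <= fold_right Nat.max 0%nat l)%nat.
Proof. induction l; simpl; intros H; [destruct H|]. destruct H as [<-|H]; [lia|]. apply IHl in H; lia. Qed.

Lemma Xmax_ge N : 1 <= N -> N < Xmax N /\ Xmax N <= N + 3 * Rpower N (2/3).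
Proof.
  intros HN1. assert (HN : 0 < N) by lra. assert (HL1 := Rpower_ge1 N HN1). set (L := 3 * Rpower N (2/3)).
  assert (HL : 0 < Rpower N (2/3)) by apply Rpower_pos.
  destruct (up_nat N HN) as [E0 [A0 B0]]. destruct (up_nat (N + L)) as [E1 [A1 B1]]; [unfold L; lra|].
  assert (Hin : In (Z.to_nat (up N)) (Alist N)).
  { unfold Alist. apply filter_In. split.
    - apply in_seq. split; [lia|]. simpl. unfold Abound. fold L. apply INR_lt. rewrite E0, E1. unfold L in *; lra.
    - apply inA_spec. rewrite E0. unfold L in *; lra. }
  unfold Xmax. split.
  - apply in_le_max, le_INR in Hin. lra.
  - destruct (Alist N) as [|a l] eqn:E; [destruct Hin|].
    assert (Hm : In (fold_right Nat.max 0%nat (a :: l)) (a :: l)).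
    { clear. revert a. induction l as [|b l IH]; intros a; simpl. left; lia.
      specialize (IH b). simpl in IH. destruct (Nat.max_spec a (Nat.max b (fold_right Nat.max 0%nat l))) as [[_ ->]|[_ ->]]; auto. }
    rewrite <- E in Hm. apply Alist_in in Hm. rewrite E in Hm. unfold L in *. lra.
Qed.

Lemma ss_filter_lt (P : nat -> bool) l : StronglySorted lt l -> StronglySorted lt (filter P l).
Proof.
  intros Hl. assert (H := ss_filter_gap P 1 l Hl).
  assert (E : forall l, StronglySorted (fun x y => (x + 1 <= y)%nat) l -> StronglySorted lt l).
  { induction l0 as [|a l0 IH]; intros Hl0; constructor; inversion Hl0; subst; auto.
    eapply Forall_impl; [|eassumption]. simpl; intros; lia. }
  apply E, H. intros; lia.
Qed.

Lemma filter_filter_len (B P : nat -> bool) l : (length (filter B (filter P l)) <= length (filter B l))%nat.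
Proof. induction l; simpl; auto. destruct (P a); simpl; destruct (B a); simpl; lia. Qed.

Lemma Rpow75 N k : 0 < N -> Rpower N (INR k / 75) = (Rpower N (1/75)) ^ k.
Proof.
  intros HN. rewrite <- Rpower_pow by apply Rpower_pos. rewrite Rpower_mult. f_equal. field.
Qed.

Theorem lemma4p3 (N : R) (hN : 10 ^ 40 <= N) :
  let X := Xmax N in
  let z := Rpower X (1 / 5) in
  let y := Rpower X (1 / (185 / 100)) in
  INR (prime_square_sum N z y) <= 3 / 100 * Rpower (INR (Acard N)) (82 / 100).
Proof.
  intros X z y.
  assert (HN1 : 1 <= N) by (simpl in hN; lra).
  assert (HN : 0 < N) by lra.
  set (t := Rpower N (1/75)).
  assert (Ht0 : 0 < t) by apply Rpower_pos.
  assert (EN : N = t ^ 75).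
  { unfold t. rewrite <- Rpow75 by auto. replace (INR 75 / 75) with 1 by (simpl; field). rewrite Rpower_1; auto. }
  assert (EL : Rpower N (2/3) = t ^ 50).
  { unfold t. rewrite <- Rpow75 by auto. f_equal. simpl; field. }
  assert (Ht3 : 3 <= t).
  { destruct (Rle_lt_dec 3 t) as [h|h]; auto.
    assert (t ^ 75 <= 3 ^ 75) by (apply pow_incr; lra).
    assert (3 ^ 75 < 10 ^ 40) by (simpl; lra). lra. }
  assert (P6 : 729 <= t ^ 6) by (replace 729 with (3 ^ 6) by (simpl; lra); apply pow_incr; lra).
  assert (P10 : 59049 <= t ^ 10) by (replace 59049 with (3 ^ 10) by (simpl; lra); apply pow_incr; lra).
  assert (P15 : 14348907 <= t ^ 15) by (replace 14348907 with (3 ^ 15) by (simpl; lra); apply pow_incr; lra).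
  assert (P5 : 243 <= t ^ 5) by (replace 243 with (3 ^ 5) by (simpl; lra); apply pow_incr; lra).
  destruct (Xmax_ge N HN1) as [HX1 HX2]. fold X in HX1, HX2.
  assert (Hz : t ^ 15 <= z).
  { unfold z. replace (t ^ 15) with (Rpower N (1/5)).
    apply Rle_Rpower_l; lra. unfold t. rewrite <- Rpow75 by auto. f_equal. simpl; field. }
  set (L := 3 * t ^ 50). set (Q := t ^ 30).
  assert (HLQ : L < Q ^ 2).
  { unfold L, Q. replace ((t^30)^2) with (t^10 * t^50) by ring. assert (0 < t^50) by (apply pow_lt; lra). nra. }
  assert (HQ0 : 0 < Q) by (apply pow_lt; lra).
  unfold prime_square_sum. rewrite INR_natsum.
  match goal with |- sumR _ (filter ?P (seq 0 ?K)) <= _ => set (Pq := P); set (K0 := K) end.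
  set (lq := filter Pq (seq 0 K0)).
  assert (HPq : forall q, In q lq -> z <= INR q).
  { intros q Hq. apply filter_In in Hq as [_ H]. unfold Pq in H.
    destruct (Rle_dec z (INR q)) as [h|h]; auto. rewrite andb_false_r in H. simpl in H. discriminate. }
  set (ind1 := fun q => negb (Rleb Q (INR q))).
  set (B := fun q => Rleb Q (INR q) && negb (Nat.eqb (Acard_div N (q * q)) 0)).
  assert (Hpt : forall q, In q lq -> INR (Acard_div N (q * q)) <=
     L * (1 / INR q ^ 2) + ((if ind1 q then 1 else 0) + (if B q then 1 else 0))).
  { intros q Hq. assert (Hq1 := HPq q Hq).
    assert (Hqq : (1 <= q * q)%nat).
    { assert (1 <= INR q) by lra. assert (1 <= q)%nat by (apply INR_le; simpl; lra). nia. }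
    assert (HC := Acard_div_bound N (q * q) Hqq). rewrite EL in HC. fold L in HC.
    rewrite mult_INR in HC. replace (INR q * INR q) with (INR q ^ 2) in HC by ring.
    assert (Hq2 : 0 < INR q ^ 2) by (apply pow_lt; lra).
    assert (Hinv : 0 <= 1 / INR q ^ 2) by apply inv_sq_nonneg.
    assert (HL0 : 0 <= L) by (unfold L; assert (0 < t^50) by (apply pow_lt; lra); lra).
    assert (E : L / INR q ^ 2 = L * (1 / INR q ^ 2)) by (field; lra). rewrite E in HC.
    unfold ind1, B, Rleb. assert (0 <= L * (1 / INR q ^ 2)) by (apply Rmult_le_pos; auto).
    destruct (Rle_dec Q (INR q)) as [hQ|hQ]; cbn [negb andb].
    - assert (Q ^ 2 <= INR q ^ 2) by (apply pow_incr; lra).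
      assert (L * (1 / INR q ^ 2) < 1).
      { rewrite <- E. apply Rmult_lt_reg_r with (INR q ^ 2); auto.
        unfold Rdiv. rewrite Rmult_assoc, Rinv_l; lra. }
      destruct (Nat.eqb (Acard_div N (q * q)) 0) eqn:Ef; cbn [negb].
      + apply Nat.eqb_eq in Ef. rewrite Ef. change (INR 0) with 0. lra.
      + assert (Acard_div N (q * q) < 2)%nat by (apply INR_lt; simpl; lra).
        assert (INR (Acard_div N (q * q)) <= 1) by (replace 1 with (INR 1) by reflexivity; apply le_INR; lia).
        lra.
    - lra. }
  eapply Rle_trans. apply sumR_le_in. exact Hpt.
  rewrite !sumR_plus, sumR_scal, !sumR_ind.
  assert (HL0 : 0 < L) by (unfold L; assert (0 < t^50) by (apply pow_lt; lra); lra).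
  assert (HPq' : forall q, Pq q = true -> z <= INR q).
  { intros q H. unfold Pq in H.
    destruct (Rle_dec z (INR q)) as [h|h]; auto. rewrite andb_false_r in H. simpl in H. discriminate. }
  assert (Hz0 : 0 < z) by lra.
  destruct (up_nat z Hz0) as [Ez [Az Bz]].
  set (a := (Z.to_nat (up z) - 1)%nat).
  assert (Ea : INR a = IZR (up z) - 1).
  { unfold a. rewrite minus_INR, Ez; [reflexivity|]. apply INR_le. rewrite Ez. simpl; lra. }
  assert (Ha : (2 <= a)%nat) by (apply INR_le; rewrite Ea; simpl; lra).
  assert (HS1 : sumR (fun q => 1 / INR q ^ 2) lq <= 1 / (INR a - 1)).
  { apply tele_filter; auto. intros q Hq. apply HPq' in Hq. apply INR_le. lra. }
  assert (HS2 : INR (length (filter ind1 lq)) <= Q + 1).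
  { eapply Rle_trans. apply (gap_count ind1 1 Q lq).
    - apply ss_filter_lt, ss_seq.
    - lia.
    - lra.
    - intros; lia.
    - intros x y0 _ _ Px Py _. unfold ind1, Rleb in Px, Py.
      destruct (Rle_dec Q (INR x)); destruct (Rle_dec Q (INR y0)); try discriminate.
      assert (0 <= INR x) by apply pos_INR. lra.
    - change (INR 1) with 1. rewrite Rdiv_1_r. lra. }
  set (Mn := Z.to_nat (up ((N + L) / Q ^ 2))).
  assert (HNLQ : 0 < (N + L) / Q ^ 2) by (apply Rdiv_lt_0_compat; [lra| apply pow_lt; lra]).
  destruct (up_nat _ HNLQ) as [EM [AM BM]]. fold Mn in EM.
  set (Pm := fun m q => Rleb Q (INR q) && inA N (q * q * m)).
  assert (HS3 : INR (length (filter B lq)) <= (L / (2 * Q) + 1) * INR Mn).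
  { eapply Rle_trans. apply le_INR, filter_filter_len.
    eapply Rle_trans. apply le_INR, (union_count B Pm (seq 1 Mn)).
    - intros q _ HB. unfold B in HB. apply andb_prop in HB as [HBQ HB0].
      unfold Rleb in HBQ. destruct (Rle_dec Q (INR q)) as [hQ|]; [|discriminate].
      unfold Acard_div in HB0.
      destruct (filter (fun n => Nat.eqb (n mod (q * q)) 0) (Alist N)) as [|n r] eqn:Ef; [discriminate|].
      assert (Hn : In n (filter (fun n => Nat.eqb (n mod (q * q)) 0) (Alist N))) by (rewrite Ef; left; auto).
      apply filter_In in Hn as [Hn Hmod]. apply Nat.eqb_eq, Nat.Div0.mod_divides in Hmod as [c Hc].
      assert (HnA := Alist_in N n Hn). rewrite EL in HnA. fold L in HnA.
      assert (Hq2 : Q ^ 2 <= INR q ^ 2) by (apply pow_incr; lra).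
      assert (HnE : INR n = INR q ^ 2 * INR c) by (rewrite Hc, !mult_INR; ring).
      assert (Hc0 : 0 <= INR c) by apply pos_INR.
      exists c. split.
      + apply in_seq. split.
        * destruct c; [|lia]. rewrite HnE in HnA. simpl in HnA. lra.
        * assert (INR c < INR Mn).
          { rewrite EM. apply Rle_lt_trans with ((N + L) / Q ^ 2); [|lra].
            apply Rmult_le_reg_r with (Q ^ 2); [apply pow_lt; lra|].
            unfold Rdiv. rewrite Rmult_assoc, Rinv_l by (apply pow_nonzero; lra). nra. }
          apply INR_lt in H. lia.
      + unfold Pm, Rleb. destruct (Rle_dec Q (INR q)); [|contradiction]. simpl.
        rewrite <- Hc. unfold Alist in Hn. apply filter_In in Hn as [_ Hn]. exact Hn.
    - rewrite INR_natsum. eapply Rle_trans. apply sumR_const_le with (c := L / (2 * Q) + 1).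
      + intros m Hm. apply in_seq in Hm. unfold Pm. assert (Hf := fiber_bound N Q m K0 HQ0 ltac:(lia)).
        rewrite EL in Hf. fold L in Hf. exact Hf.
      + rewrite length_seq. lra. }
  assert (HA := Acard_lower N HN1). rewrite EL in HA.
  assert (Hrhs : t ^ 41 <= Rpower (INR (Acard N)) (82 / 100)).
  { replace (t ^ 41) with (Rpower (t ^ 50) (82/100)).
    - apply Rle_Rpower_l; [lra|]. split; [apply pow_lt; lra|]. assert (2 <= t^50) by (replace (t^50) with (t^10*t^40) by ring; assert (1 <= t^40) by (apply pow_R1_Rle; lra); nra). lra.
    - rewrite <- EL, Rpower_mult. unfold t. rewrite <- Rpow75 by auto. f_equal. simpl; field. }
  assert (T35 : 0 < t ^ 35) by (apply pow_lt; lra).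
  assert (T20 : 243 * 243 * 243 * 243 <= t ^ 20) by (replace (t^20) with (t^5*t^5*t^5*t^5) by ring; nra).
  set (D := INR a - 1).
  assert (HD : t ^ 15 - 2 <= D) by (unfold D; rewrite Ea; lra).
  assert (F1 : L * sumR (fun q => 1 / INR q ^ 2) lq <= 6 * t ^ 35).
  { apply Rle_trans with (L * (1 / D)); [apply Rmult_le_compat_l; [lra| exact HS1]|].
    replace (L * (1 / D)) with (L / D) by (field; lra).
    apply Rmult_le_reg_r with D; [lra|]. unfold Rdiv. rewrite Rmult_assoc, Rinv_l by lra.
    unfold L. replace (t^50) with (t^15 * t^35) by ring. nra. }
  assert (F2 : (L / (2 * Q) + 1) * INR Mn <= 4 * t ^ 35).
  { assert (E1 : L / (2 * Q) = 3 / 2 * t ^ 20) by (unfold L, Q; field; lra).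
    assert (E2 : (N + L) / Q ^ 2 = t ^ 15 + 3 / t ^ 10) by (unfold L, Q; rewrite EN; field; lra).
    assert (E3 : 3 / t ^ 10 <= 1).
    { apply Rmult_le_reg_r with (t^10); [apply pow_lt; lra|]. unfold Rdiv. rewrite Rmult_assoc, Rinv_l by (apply pow_nonzero; lra). lra. }
    rewrite E1. assert (HM : INR Mn <= t ^ 15 + 2) by lra.
    assert (0 <= INR Mn) by apply pos_INR.
    apply Rle_trans with ((3/2 * t^20 + 1) * (t^15 + 2)); [apply Rmult_le_compat_l; lra|].
    replace (t^35) with (t^20 * t^15) by ring. nra. }
  assert (F3 : Q + 1 <= t ^ 35) by (unfold Q; replace (t^35) with (t^30*t^5) by ring; assert (1 <= t^30) by (apply pow_R1_Rle; lra); nra).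
  assert (F4 : 21 * t ^ 35 <= 3 / 100 * t ^ 41) by (replace (t^41) with (t^6 * t^35) by ring; nra).
  lra.
Qed.
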